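(* Let $(Q,\circ)$ be a group with identity $e$, and let $(Q,\star)$ be a right modular, unipotent magma with a left unit $\hat{e}$. If $(Q,\circ)$ and $(Q,\star)$ are double magma partners, i.e. $(x\circ y)\star(z\circ w)=(x\star z)\circ(y\star w)$ for all $x,y,z,w\in Q$, then $(Q,\circ)$ is abelian and $x\star y=x^{-1}\circ y$ for all $x,y\in Q$.
   Context: A magma $(Q,\star)$ is right modular if $(x\star y)\star z=(z\star y)\star x$ for all $x,y,z$; unipotent if $x\star x=y\star y$ for all $x,y$; $\hat{e}$ is a left unit if $\hat{e}\star x=x$ for all $x$. *)

(* Defs.v *)
Definition is_group {Q : Type} (op : Q -> Q -> Q) (e : Q) (inv : Q -> Q) : Prop :=
  (forall x y z, op (op x y) z = op x (op y z)) /\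
  (forall x, op e x = x) /\ (forall x, op x e = x) /\
  (forall x, op (inv x) x = e) /\ (forall x, op x (inv x) = e).

Definition right_modular {Q : Type} (s : Q -> Q -> Q) : Prop :=
  forall x y z, s (s x y) z = s (s z y) x.

Definition unipotent {Q : Type} (s : Q -> Q -> Q) : Prop :=
  forall x y, s x x = s y y.

Definition left_unit {Q : Type} (s : Q -> Q -> Q) (u : Q) : Prop :=
  forall x, s u x = x.

Definition double_magma_partners {Q : Type} (o s : Q -> Q -> Q) : Prop :=
  forall x y z w, s (o x y) (o z w) = o (s x z) (s y w).

(* Main.v *)
Require Import Defs.
From Stdlib Require Import Setoid.

Theorem theorem6p2 (Q : Type) (o : Q -> Q -> Q) (e : Q) (inv : Q -> Q)
  (s : Q -> Q -> Q) (ehat : Q) :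
  is_group o e inv ->
  right_modular s -> unipotent s -> left_unit s ehat ->
  double_magma_partners o s ->
  (forall x y, o x y = o y x) /\ (forall x y, s x y = o (inv x) y).
Proof.
  intros [A [L [R [IL IR]]]] _ U LU D.
  assert (Uniq : forall a x, o a x = e -> a = inv x).
  { intros a x H. rewrite <- (R a), <- (IR x), <- A, H, L. reflexivity. }
  assert (Inv2 : forall x, inv (inv x) = x).
  { intros x. symmetry. apply Uniq. apply IR. }
  assert (Hee : o e e = e) by apply L.
  assert (Hsplit : forall x y, s x y = o (s x e) (s e y)).
  { intros x y. rewrite <- D, R, L. reflexivity. }
  assert (Hg : forall y, s e y = y).
  { intros y. rewrite <- (LU y) at 2. rewrite (Hsplit ehat y), (LU e), L. reflexivity. }
  assert (Hf : forall x, s x e = inv x).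
  { intros x. apply Uniq. rewrite <- (Hg x) at 2. rewrite <- Hsplit.
    rewrite (U x e). apply Hg. }
  assert (Hs : forall x y, s x y = o (inv x) y).
  { intros x y. rewrite Hsplit, Hf, Hg. reflexivity. }
  split; [|exact Hs].
  intros x y.
  assert (H1 : inv (o x y) = o (inv x) (inv y)).
  { rewrite <- !Hf, <- D, Hee. reflexivity. }
  assert (H2 : o (inv x) (inv y) = inv (o y x)).
  { apply Uniq. rewrite A, <- (A (inv y)), IL, L, IL. reflexivity. }
  rewrite <- (Inv2 (o x y)), <- (Inv2 (o y x)), H1, H2. reflexivity.
Qed.
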